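(* Let $K\neq0$. For all $A,P,B,Q\in\mathbb S^3_K$ with $A\neq P$ and $B\neq Q$, $|\operatorname{cosq}_K(\overrightarrow{AP},\overrightarrow{BQ})|\le1$.
   Context: $\mathbb S^3_K$ is the open hemisphere of radius $1/\sqrt K$ of the round 3-sphere if $K>0$, and 3-dimensional hyperbolic space of curvature $K$ if $K<0$, with intrinsic metric $\rho$. Let $\kappa=\sqrt{|K|}$. For $A\neq P$, $B\neq Q$ put $x=\rho(A,P)$, $y=\rho(B,Q)$, $a=\rho(A,B)$, $b=\rho(P,Q)$, $d=\rho(P,B)$, $f=\rho(A,Q)$; for $K>0$ $$\operatorname{cosq}_K(\overrightarrow{AP},\overrightarrow{BQ})=\frac{\cos\kappa b+\cos\kappa x\cos\kappa y}{\sin\kappa x\sin\kappa y}-\frac{(\cos\kappa x+\cos\kappa d)(\cos\kappa y+\cos\kappa f)}{(1+\cos\kappa a)\sin\kappa x\sin\kappa y},$$ and for $K<0$ $$\operatorname{cosq}_K(\overrightarrow{AP},\overrightarrow{BQ})=\frac{(\cosh\kappa x+\cosh\kappa d)(\cosh\kappa y+\cosh\kappa f)}{(1+\cosh\kappa a)\sinh\kappa x\sinh\kappa y}-\frac{\cosh\kappa b+\cosh\kappa x\cosh\kappa y}{\sinh\kappa x\sinh\kappa y}.$$ *)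

(* Defs.v *)
From Stdlib Require Import Reals.
Open Scope R_scope.

Record pt4 : Type := mkpt4 { c0 : R; c1 : R; c2 : R; c3 : R }.

Definition edot (x y : pt4) : R :=
  c0 x * c0 y + c1 x * c1 y + c2 x * c2 y + c3 x * c3 y.

Definition ldot (x y : pt4) : R :=
  - (c0 x * c0 y) + c1 x * c1 y + c2 x * c2 y + c3 x * c3 y.

Definition kappa (K : R) : R := sqrt (Rabs K).

(* Model of S^3_K:
   K > 0 : open hemisphere { x | |x|^2 = 1/K, c3 x > 0 } of the round 3-sphere
           of radius 1/sqrt K in R^4;
   K < 0 : hyperboloid model { x | <x,x>_L = 1/K, c0 x > 0 } of hyperbolic
           3-space of curvature K. *)
Definition in_S3 (K : R) (x : pt4) : Prop :=
  (0 < K /\ edot x x = / K /\ 0 < c3 x) \/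
  (K < 0 /\ ldot x x = / K /\ 0 < c0 x).

Definition arcosh (t : R) : R := ln (t + sqrt (t * t - 1)).

Definition rho (K : R) (x y : pt4) : R :=
  if Rlt_dec 0 K then acos (K * edot x y) / kappa K
  else arcosh (K * ldot x y) / kappa K.

Definition cosq (K : R) (A P B Q : pt4) : R :=
  let k := kappa K in
  let x := rho K A P in
  let y := rho K B Q in
  let a := rho K A B in
  let b := rho K P Q in
  let d := rho K P B in
  let f := rho K A Q in
  if Rlt_dec 0 K then
    (cos (k*b) + cos (k*x) * cos (k*y)) / (sin (k*x) * sin (k*y))
    - (cos (k*x) + cos (k*d)) * (cos (k*y) + cos (k*f))
        / ((1 + cos (k*a)) * sin (k*x) * sin (k*y))
  else
    (cosh (k*x) + cosh (k*d)) * (cosh (k*y) + cosh (k*f))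
        / ((1 + cosh (k*a)) * sinh (k*x) * sinh (k*y))
    - (cosh (k*b) + cosh (k*x) * cosh (k*y)) / (sinh (k*x) * sinh (k*y)).

(* Main.v *)
Require Import Defs.
From Stdlib Require Import Reals.
Open Scope R_scope.
From Stdlib Require Import Lra Psatz.
Import Defs.

Definition comb (s : R) (x : pt4) (t : R) (y : pt4) : pt4 :=
  mkpt4 (s*c0 x + t*c0 y) (s*c1 x + t*c1 y) (s*c2 x + t*c2 y) (s*c3 x + t*c3 y).
Definition sc (s : R) (x : pt4) : pt4 := mkpt4 (s*c0 x) (s*c1 x) (s*c2 x) (s*c3 x).

Lemma edot_sym x y : edot x y = edot y x. Proof. unfold edot; ring. Qed.
Lemma ldot_sym x y : ldot x y = ldot y x. Proof. unfold ldot; ring. Qed.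
Lemma edot_combl s x t y z : edot (comb s x t y) z = s * edot x z + t * edot y z.
Proof. unfold edot, comb; simpl; ring. Qed.
Lemma edot_combr s x t y z : edot z (comb s x t y) = s * edot z x + t * edot z y.
Proof. unfold edot, comb; simpl; ring. Qed.
Lemma ldot_combl s x t y z : ldot (comb s x t y) z = s * ldot x z + t * ldot y z.
Proof. unfold ldot, comb; simpl; ring. Qed.
Lemma ldot_combr s x t y z : ldot z (comb s x t y) = s * ldot z x + t * ldot z y.
Proof. unfold ldot, comb; simpl; ring. Qed.
Lemma edot_sc s x y : edot (sc s x) (sc s y) = s*s*edot x y.
Proof. unfold edot, sc; simpl; ring. Qed.
Lemma ldot_sc s x y : ldot (sc s x) (sc s y) = s*s*ldot x y.
Proof. unfold ldot, sc; simpl; ring. Qed.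

Lemma sc_inj s x y : s <> 0 -> sc s x = sc s y -> x = y.
Proof.
  intros hs h. destruct x as [x0 x1 x2 x3], y as [y0 y1 y2 y3].
  unfold sc in h; simpl in h. injection h; intros.
  f_equal; apply (Rmult_eq_reg_l s); auto.
Qed.

Lemma edot_pos x : 0 <= edot x x /\ (edot x x = 0 -> x = mkpt4 0 0 0 0).
Proof.
  destruct x as [x0 x1 x2 x3]; unfold edot; simpl. split. nra.
  intro h. f_equal; nra.
Qed.

Lemma edot_CS u w : (edot u w)^2 <= edot u u * edot w w.
Proof.
  destruct u as [u0 u1 u2 u3], w as [w0 w1 w2 w3]; unfold edot; simpl.
  assert (E : (u0*u0+u1*u1+u2*u2+u3*u3)*(w0*w0+w1*w1+w2*w2+w3*w3)
     - (u0*w0+u1*w1+u2*w2+u3*w3)^2 =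
     (u0*w1-u1*w0)^2+(u0*w2-u2*w0)^2+(u0*w3-u3*w0)^2+(u1*w2-u2*w1)^2
     +(u1*w3-u3*w1)^2+(u2*w3-u3*w2)^2) by ring.
  assert (0 <= (u0*w1-u1*w0)^2+(u0*w2-u2*w0)^2+(u0*w3-u3*w0)^2+(u1*w2-u2*w1)^2
     +(u1*w3-u3*w1)^2+(u2*w3-u3*w2)^2) by (repeat apply Rplus_le_le_0_compat; apply pow2_ge_0).
  lra.
Qed.

Lemma ldot_pos b v : ldot b b < 0 -> ldot v b = 0 ->
  0 <= ldot v v /\ (ldot v v = 0 -> v = mkpt4 0 0 0 0).
Proof.
  destruct b as [b0 b1 b2 b3], v as [v0 v1 v2 v3]; unfold ldot; simpl.
  intros hb hvb.
  set (Sb := b1*b1+b2*b2+b3*b3). set (Sv := v1*v1+v2*v2+v3*v3).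
  assert (hSb : 0 <= Sb) by (unfold Sb; nra).
  assert (hSv : 0 <= Sv) by (unfold Sv; nra).
  assert (CS : (v1*b1+v2*b2+v3*b3)^2 <= Sv*Sb).
  { unfold Sv, Sb.
    assert (E : (v1*v1+v2*v2+v3*v3)*(b1*b1+b2*b2+b3*b3) - (v1*b1+v2*b2+v3*b3)^2
      = (v1*b2-v2*b1)^2+(v1*b3-v3*b1)^2+(v2*b3-v3*b2)^2) by ring.
    assert (0 <= (v1*b2-v2*b1)^2+(v1*b3-v3*b1)^2+(v2*b3-v3*b2)^2)
      by (repeat apply Rplus_le_le_0_compat; apply pow2_ge_0). lra. }
  assert (hvb' : v0*b0 = v1*b1+v2*b2+v3*b3) by lra.
  assert (hb0 : Sb < b0*b0) by (unfold Sb; lra).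
  assert (H1 : (v0*v0)*(b0*b0) <= Sv*(b0*b0)).
  { assert (e1 : (v0*b0)^2 = (v0*v0)*(b0*b0)) by ring.
    assert (e2 : (v0*b0)^2 = (v1*b1+v2*b2+v3*b3)^2) by (rewrite hvb'; reflexivity).
    assert (Sv*Sb <= Sv*(b0*b0)) by (apply Rmult_le_compat_l; lra). lra. }
  assert (H2 : v0*v0 <= Sv).
  { apply (Rmult_le_reg_r (b0*b0)). nra. exact H1. }
  split. unfold Sv in H2; lra.
  intro h. assert (hv : v0*v0 = Sv) by (unfold Sv; lra).
  assert (Sv = 0).
  { assert (E2 : (v0*v0)*(b0*b0) = (v1*b1+v2*b2+v3*b3)^2) by (rewrite <- hvb'; ring).
    rewrite hv in E2. nra. }
  unfold Sv in H. f_equal; nra.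
Qed.

Lemma ldot_CS b u w : ldot b b < 0 -> ldot u b = 0 -> ldot w b = 0 ->
  (ldot u w)^2 <= ldot u u * ldot w w.
Proof.
  intros hb hu hw.
  set (V := comb (ldot w w) u (- ldot u w) w).
  assert (hV : ldot V b = 0) by (unfold V; rewrite ldot_combl, hu, hw; ring).
  destruct (ldot_pos b V hb hV) as [HV _].
  unfold V in HV. rewrite !ldot_combl, !ldot_combr, (ldot_sym w u) in HV.
  destruct (ldot_pos b w hb hw) as [Hw Hw0].
  destruct (Rle_lt_or_eq_dec _ _ Hw) as [Hlt|Heq].
  - nra.
  - rewrite (Hw0 (eq_sym Heq)). unfold ldot; simpl. nra.
Qed.

Lemma sph_pair a p : edot a a = 1 -> edot p p = 1 -> 0 < c3 a -> 0 < c3 p ->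
  -1 < edot a p <= 1 /\ (edot a p = 1 -> a = p).
Proof.
  intros ha hp h3a h3p. set (cx := edot a p).
  set (V := comb 1 p (- cx) a).
  assert (hV : edot V V = 1 - cx^2).
  { unfold V. rewrite !edot_combl, !edot_combr, (edot_sym p a), ha, hp. fold cx. ring. }
  destruct (edot_pos V) as [H0 Hz].
  assert (Z : cx^2 = 1 -> p = sc cx a).
  { intro h. assert (V = mkpt4 0 0 0 0) by (apply Hz; lra).
    unfold V, comb in H. destruct a, p; simpl in *. injection H; intros.
    unfold sc; simpl. f_equal; lra. }
  assert (hle : -1 <= cx <= 1) by nra.
  split; [split|].
  - destruct (Rle_lt_or_eq_dec _ _ (proj1 hle)) as [l|e]; auto.
    exfalso. rewrite <- e in Z. assert (p = sc (-1) a) by (apply Z; ring).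
    rewrite H in h3p. unfold sc in h3p; simpl in h3p. lra.
  - lra.
  - intro e. assert (p = sc cx a) by (apply Z; fold cx in e; rewrite e; ring).
    fold cx in e. rewrite e in H. rewrite H. destruct a; unfold sc; simpl; f_equal; ring.
Qed.

Lemma hyp_pos a p : ldot a a = -1 -> ldot p p = -1 -> 0 < c0 a -> 0 < c0 p ->
  0 < - ldot a p.
Proof.
  destruct a as [a0 a1 a2 a3], p as [p0 p1 p2 p3]; unfold ldot; simpl.
  intros ha hp h0a h0p.
  set (Sa := a1*a1+a2*a2+a3*a3). set (Sp := p1*p1+p2*p2+p3*p3).
  set (X := a1*p1+a2*p2+a3*p3).
  assert (CS : X^2 <= Sa*Sp).
  { unfold X, Sa, Sp.
    assert (E : (a1*a1+a2*a2+a3*a3)*(p1*p1+p2*p2+p3*p3) - (a1*p1+a2*p2+a3*p3)^2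
      = (a1*p2-a2*p1)^2+(a1*p3-a3*p1)^2+(a2*p3-a3*p2)^2) by ring.
    assert (0 <= (a1*p2-a2*p1)^2+(a1*p3-a3*p1)^2+(a2*p3-a3*p2)^2)
      by (repeat apply Rplus_le_le_0_compat; apply pow2_ge_0). lra. }
  assert (hSa : 0 <= Sa) by (unfold Sa; nra).
  assert (hSp : 0 <= Sp) by (unfold Sp; nra).
  assert (ea : a0*a0 = 1 + Sa) by (unfold Sa; lra).
  assert (ep : p0*p0 = 1 + Sp) by (unfold Sp; lra).
  assert (hY : (a0*p0)^2 = (1+Sa)*(1+Sp)) by (rewrite <- ea, <- ep; ring).
  assert (hlt : X^2 < (a0*p0)^2) by nra.
  assert (0 < a0*p0) by nra.
  assert (X < a0*p0).
  { destruct (Rlt_or_le X (a0*p0)) as [l|l]; auto. nra. }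
  unfold X in *. lra.
Qed.

Lemma hyp_pair a p : ldot a a = -1 -> ldot p p = -1 -> 0 < c0 a -> 0 < c0 p ->
  1 <= - ldot a p /\ (- ldot a p = 1 -> a = p).
Proof.
  intros ha hp h0a h0p. pose proof (hyp_pos a p ha hp h0a h0p) as hc.
  set (cx := - ldot a p) in *.
  set (V := comb 1 p (- cx) a).
  assert (hVa : ldot V a = 0).
  { unfold V. rewrite !ldot_combl, (ldot_sym p a), ha. unfold cx. ring. }
  assert (hV : ldot V V = cx^2 - 1).
  { unfold V. rewrite !ldot_combl, !ldot_combr, (ldot_sym p a), ha, hp.
    unfold cx. ring. }
  assert (hb : ldot a a < 0) by lra.
  destruct (ldot_pos a V hb hVa) as [H0 Hz].
  split.
  - nra.
  - intro e. assert (V = mkpt4 0 0 0 0) by (apply Hz; rewrite hV, e; ring).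
    unfold V, comb in H. rewrite e in H. destruct a, p; simpl in *. injection H; intros.
    f_equal; lra.
Qed.

Lemma sph_tr a p b q : edot a a = 1 -> edot p p = 1 -> edot b b = 1 -> edot q q = 1 ->
  1 + edot a b <> 0 ->
  let cx := edot a p in let cy := edot b q in let ca := edot a b in
  let cb := edot p q in let cd := edot p b in let cf := edot a q in
  ((cb + cx*cy)*(1+ca) - (cx+cd)*(cy+cf))^2 <= (1+ca)^2*((1-cx^2)*(1-cy^2)).
Proof.
  intros ha hp hb hq hca cx cy ca cb cd cf.
  set (al := (cx*ca - cd)/(1+ca)).
  set (U := comb 1 (comb 1 p (-cx) a) al (comb 1 a 1 b)).
  set (W := comb 1 q (-cy) b).
  assert (hUU : edot U U = 1 - cx^2).
  { unfold U. rewrite !edot_combl, !edot_combr, (edot_sym p a), (edot_sym b a),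
      (edot_sym b p), ha, hp, hb. unfold al, cx, ca, cd. unfold ca in hca. field. auto. }
  assert (hWW : edot W W = 1 - cy^2).
  { unfold W. rewrite !edot_combl, !edot_combr, (edot_sym q b), hb, hq. fold cy. ring. }
  assert (hUW : edot U W * (1+ca) = (cb + cx*cy)*(1+ca) - (cx+cd)*(cy+cf)).
  { unfold U, W. rewrite !edot_combl, !edot_combr, hb.
    try rewrite (edot_sym b a); try rewrite (edot_sym b p).
    unfold al, cx, cy, ca, cb, cd, cf. unfold ca in hca. field. auto. }
  rewrite <- hUW, <- hUU, <- hWW.
  pose proof (edot_CS U W). 
  assert (0 <= (1+ca)^2) by apply pow2_ge_0.
  replace ((edot U W * (1 + ca)) ^ 2) with ((1+ca)^2 * (edot U W)^2) by ring.
  apply Rmult_le_compat_l; auto.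
Qed.

Lemma hyp_tr a p b q : ldot a a = -1 -> ldot p p = -1 -> ldot b b = -1 -> ldot q q = -1 ->
  1 - ldot a b <> 0 ->
  let cx := - ldot a p in let cy := - ldot b q in let ca := - ldot a b in
  let cb := - ldot p q in let cd := - ldot p b in let cf := - ldot a q in
  ((cx+cd)*(cy+cf) - (cb + cx*cy)*(1+ca))^2 <= (1+ca)^2*((cx^2-1)*(cy^2-1)).
Proof.
  intros ha hp hb hq hca cx cy ca cb cd cf.
  set (al := (cx*ca - cd)/(1+ca)).
  set (U := comb 1 (comb 1 p (-cx) a) al (comb 1 a 1 b)).
  set (W := comb 1 q (-cy) b).
  assert (hca' : 1 + ca <> 0) by (unfold ca; lra).
  assert (hUU : ldot U U = cx^2 - 1).
  { unfold U. rewrite !ldot_combl, !ldot_combr, (ldot_sym p a), (ldot_sym b a),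
      (ldot_sym b p), ha, hp, hb. unfold al, cx, ca, cd. unfold ca in hca'. field. auto. }
  assert (hWW : ldot W W = cy^2 - 1).
  { unfold W. rewrite !ldot_combl, !ldot_combr, (ldot_sym q b), hb, hq. unfold cy. ring. }
  assert (hUb : ldot U b = 0).
  { unfold U. rewrite !ldot_combl, hb. unfold al, cx, ca, cd. unfold ca in hca'. field. auto. }
  assert (hWb : ldot W b = 0).
  { unfold W. rewrite !ldot_combl, hb, (ldot_sym q b). unfold cy. ring. }
  assert (hUW : ldot U W * (1+ca) = (cx+cd)*(cy+cf) - (cb + cx*cy)*(1+ca)).
  { unfold U, W. rewrite !ldot_combl, !ldot_combr, hb.
    try rewrite (ldot_sym b a); try rewrite (ldot_sym b p).
    unfold al, cx, cy, ca, cb, cd, cf. unfold ca in hca'. field. auto. }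
  rewrite <- hUW, <- hUU, <- hWW.
  assert (hbb : ldot b b < 0) by lra.
  pose proof (ldot_CS b U W hbb hUb hWb).
  assert (0 <= (1+ca)^2) by apply pow2_ge_0.
  replace ((ldot U W * (1 + ca)) ^ 2) with ((1+ca)^2 * (ldot U W)^2) by ring.
  apply Rmult_le_compat_l; auto.
Qed.

Lemma abs_le1 z D N : 0 < D -> z * D = N -> N^2 <= D^2 -> Rabs z <= 1.
Proof.
  intros hD hz hN. rewrite <- hz in hN.
  assert (h : z^2 <= 1).
  { apply (Rmult_le_reg_r (D^2)). nra. nra. }
  unfold Rabs; destruct (Rcase_abs z); nra.
Qed.

Lemma sph_fin cx cy ca cb cd cf : -1 < cx < 1 -> -1 < cy < 1 -> 0 < 1 + ca ->
  ((cb + cx*cy)*(1+ca) - (cx+cd)*(cy+cf))^2 <= (1+ca)^2*((1-cx^2)*(1-cy^2)) ->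
  Rabs ((cb + cx * cy) / (sqrt (1 - cx²) * sqrt (1 - cy²))
    - (cx + cd) * (cy + cf) / ((1 + ca) * sqrt (1 - cx²) * sqrt (1 - cy²))) <= 1.
Proof.
  intros hx hy ha hN. unfold Rsqr.
  assert (sx : 0 < sqrt (1 - cx*cx)) by (apply sqrt_lt_R0; nra).
  assert (sy : 0 < sqrt (1 - cy*cy)) by (apply sqrt_lt_R0; nra).
  pose proof (sqrt_sqrt (1 - cx*cx) ltac:(nra)).
  pose proof (sqrt_sqrt (1 - cy*cy) ltac:(nra)).
  apply (abs_le1 _ ((1+ca)*sqrt (1 - cx*cx)*sqrt (1 - cy*cy))
     ((cb + cx*cy)*(1+ca) - (cx+cd)*(cy+cf))).
  - apply Rmult_lt_0_compat; [apply Rmult_lt_0_compat|]; lra.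
  - field. lra.
  - replace (((1 + ca) * sqrt (1 - cx * cx) * sqrt (1 - cy * cy)) ^ 2) with
      ((1+ca)^2 * ((sqrt (1 - cx*cx) * sqrt (1 - cx*cx)) * (sqrt (1 - cy*cy) * sqrt (1 - cy*cy)))) by ring.
    rewrite H, H0. replace (1 - cx*cx) with (1 - cx^2) by ring.
    replace (1 - cy*cy) with (1 - cy^2) by ring. exact hN.
Qed.

Lemma hyp_fin cx cy ca cb cd cf : 1 < cx -> 1 < cy -> 0 < 1 + ca ->
  ((cx+cd)*(cy+cf) - (cb + cx*cy)*(1+ca))^2 <= (1+ca)^2*((cx^2-1)*(cy^2-1)) ->
  Rabs ((cx + cd) * (cy + cf) / ((1 + ca) * sqrt (cx*cx-1) * sqrt (cy*cy-1))
    - (cb + cx * cy) / (sqrt (cx*cx-1) * sqrt (cy*cy-1))) <= 1.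
Proof.
  intros hx hy ha hN.
  assert (sx : 0 < sqrt (cx*cx-1)) by (apply sqrt_lt_R0; nra).
  assert (sy : 0 < sqrt (cy*cy-1)) by (apply sqrt_lt_R0; nra).
  pose proof (sqrt_sqrt (cx*cx-1) ltac:(nra)).
  pose proof (sqrt_sqrt (cy*cy-1) ltac:(nra)).
  apply (abs_le1 _ ((1+ca)*sqrt (cx*cx-1)*sqrt (cy*cy-1))
     ((cx+cd)*(cy+cf) - (cb + cx*cy)*(1+ca))).
  - apply Rmult_lt_0_compat; [apply Rmult_lt_0_compat|]; lra.
  - field. lra.
  - replace (((1 + ca) * sqrt (cx*cx-1) * sqrt (cy*cy-1)) ^ 2) with
      ((1+ca)^2 * ((sqrt (cx*cx-1) * sqrt (cx*cx-1)) * (sqrt (cy*cy-1) * sqrt (cy*cy-1)))) by ring.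
    rewrite H, H0. replace (cx*cx-1) with (cx^2-1) by ring.
    replace (cy*cy-1) with (cy^2-1) by ring. exact hN.
Qed.

Lemma cosh_arcosh t : 1 <= t -> cosh (arcosh t) = t.
Proof.
  intro ht. unfold cosh, arcosh.
  set (s := sqrt (t*t-1)).
  assert (hs : 0 <= s) by apply sqrt_pos.
  assert (hss : s*s = t*t-1) by (apply sqrt_sqrt; nra).
  rewrite exp_Ropp, exp_ln by lra. field_simplify_eq; [nra | lra].
Qed.

Lemma sinh_arcosh t : 1 <= t -> sinh (arcosh t) = sqrt (t*t-1).
Proof.
  intro ht. unfold sinh, arcosh.
  set (s := sqrt (t*t-1)).
  assert (hs : 0 <= s) by apply sqrt_pos.
  assert (hss : s*s = t*t-1) by (apply sqrt_sqrt; nra).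
  rewrite exp_Ropp, exp_ln by lra. field_simplify_eq; [nra | lra].
Qed.

Lemma key_sph K X Y : 0 < K ->
  kappa K * rho K X Y = acos (edot (sc (sqrt K) X) (sc (sqrt K) Y)).
Proof.
  intro hK. rewrite edot_sc, sqrt_sqrt by lra. unfold rho, kappa.
  destruct (Rlt_dec 0 K); [|lra]. rewrite Rabs_pos_eq by lra.
  assert (0 < sqrt K) by (apply sqrt_lt_R0; lra). field. lra.
Qed.

Lemma key_hyp K X Y : K < 0 ->
  kappa K * rho K X Y = arcosh (- ldot (sc (sqrt (-K)) X) (sc (sqrt (-K)) Y)).
Proof.
  intro hK. rewrite ldot_sc, sqrt_sqrt by lra. unfold rho, kappa.
  destruct (Rlt_dec 0 K); [lra|]. rewrite Rabs_left by lra.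
  assert (0 < sqrt (-K)) by (apply sqrt_lt_R0; lra).
  replace (- (- K * ldot X Y)) with (K * ldot X Y) by ring. field. lra.
Qed.

Theorem corollary3p3 (K : R) (hK : K <> 0) (A P B Q : pt4)
  (hA : in_S3 K A) (hP : in_S3 K P) (hB : in_S3 K B) (hQ : in_S3 K Q)
  (hAP : A <> P) (hBQ : B <> Q) :
  Rabs (cosq K A P B Q) <= 1.
Proof.
  destruct (Rlt_dec 0 K) as [Kp|Kn].
  - set (s := sqrt K).
    assert (hs : 0 < s) by (apply sqrt_lt_R0; lra).
    assert (hss : s*s = K) by (apply sqrt_sqrt; lra).
    assert (U : forall X, in_S3 K X -> edot (sc s X) (sc s X) = 1 /\ 0 < c3 (sc s X)).
    { intros X [[_ [h1 h2]]|[h _]]; [|lra]. rewrite edot_sc, hss, h1. split. field; lra.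
      unfold sc; simpl. nra. }
    destruct (U A hA) as [ha ha3], (U P hP) as [hp hp3], (U B hB) as [hb hb3],
      (U Q hQ) as [hq hq3].
    set (a := sc s A) in *. set (p := sc s P) in *. set (b := sc s B) in *.
    set (q := sc s Q) in *.
    assert (hap : a <> p) by (intro e; apply hAP; exact (sc_inj s A P ltac:(lra) e)).
    assert (hbq : b <> q) by (intro e; apply hBQ; exact (sc_inj s B Q ltac:(lra) e)).
    destruct (sph_pair a p ha hp ha3 hp3) as [Bap Eap].
    destruct (sph_pair b q hb hq hb3 hq3) as [Bbq Ebq].
    destruct (sph_pair a b ha hb ha3 hb3) as [Bab _].
    destruct (sph_pair p q hp hq hp3 hq3) as [Bpq _].
    destruct (sph_pair p b hp hb hp3 hb3) as [Bpb _].
    destruct (sph_pair a q ha hq ha3 hq3) as [Baq _].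
    assert (cx1 : edot a p < 1) by (destruct (Rle_lt_or_eq_dec _ _ (proj2 Bap)); auto; tauto).
    assert (cy1 : edot b q < 1) by (destruct (Rle_lt_or_eq_dec _ _ (proj2 Bbq)); auto; tauto).
    unfold cosq; cbv zeta.
    rewrite !key_sph by lra. fold s a p b q.
    destruct (Rlt_dec 0 K); [|lra].
    rewrite !cos_acos, !sin_acos by lra.
    apply sph_fin; try lra.
    apply sph_tr; auto; lra.
  - assert (Kn' : K < 0) by lra.
    set (s := sqrt (-K)).
    assert (hs : 0 < s) by (apply sqrt_lt_R0; lra).
    assert (hss : s*s = -K) by (apply sqrt_sqrt; lra).
    assert (U : forall X, in_S3 K X -> ldot (sc s X) (sc s X) = -1 /\ 0 < c0 (sc s X)).
    { intros X [[h _]|[_ [h1 h2]]]; [lra|]. rewrite ldot_sc, hss, h1. split. field; lra.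
      unfold sc; simpl. nra. }
    destruct (U A hA) as [ha ha3], (U P hP) as [hp hp3], (U B hB) as [hb hb3],
      (U Q hQ) as [hq hq3].
    set (a := sc s A) in *. set (p := sc s P) in *. set (b := sc s B) in *.
    set (q := sc s Q) in *.
    assert (hap : a <> p) by (intro e; apply hAP; exact (sc_inj s A P ltac:(lra) e)).
    assert (hbq : b <> q) by (intro e; apply hBQ; exact (sc_inj s B Q ltac:(lra) e)).
    destruct (hyp_pair a p ha hp ha3 hp3) as [Bap Eap].
    destruct (hyp_pair b q hb hq hb3 hq3) as [Bbq Ebq].
    destruct (hyp_pair a b ha hb ha3 hb3) as [Bab _].
    destruct (hyp_pair p q hp hq hp3 hq3) as [Bpq _].
    destruct (hyp_pair p b hp hb hp3 hb3) as [Bpb _].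
    destruct (hyp_pair a q ha hq ha3 hq3) as [Baq _].
    assert (cx1 : 1 < - ldot a p) by (destruct (Rle_lt_or_eq_dec _ _ Bap) as [l|e]; auto; symmetry in e; tauto).
    assert (cy1 : 1 < - ldot b q) by (destruct (Rle_lt_or_eq_dec _ _ Bbq) as [l|e]; auto; symmetry in e; tauto).
    unfold cosq; cbv zeta.
    rewrite !key_hyp by lra. fold s a p b q.
    destruct (Rlt_dec 0 K); [lra|].
    rewrite !cosh_arcosh, !sinh_arcosh by lra.
    apply hyp_fin; try lra.
    apply hyp_tr; auto; lra.
Qed.
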